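(* Let $n\ge2$ and $\Delta\subset B_n$ a proper ideal such that for every $A\subseteq[1,n]$, $A\in\Delta$ if and only if $[1,n]\setminus A\notin\Delta$. Then $\mathrm{Bier}(B_n,\Delta)$ is centrally symmetric, with involution exchanging the vertex $([\{x\}],[1,n])$-type vertex $(\{x\},[1,n])$ and the vertex $(\emptyset,[1,n]\setminus\{x\})$ for each $x\in[1,n]$.
   Context: $B_n$ is the Boolean lattice of subsets of $[1,n]$. A proper ideal $\Delta\subset B_n$ is a nonempty family of subsets of $[1,n]$ closed under taking subsets with $[1,n]\notin\Delta$. The Bier sphere $\mathrm{Bier}(B_n,\Delta)$ is the simplicial complex whose faces are the pairs $(B,C)$ with $B\subsetneq C\subseteq[1,n]$, $B\in\Delta$, $C\notin\Delta$, with $(B',C')$ a face of $(B,C)$ iff $B'\subseteq B$ and $C\subseteq C'$; its vertices are the pairs $(\{x\},[1,n])$ with $\{x\}\in\Delta$ and $(\emptyset,[1,n]\setminus\{x\})$ with $[1,n]\setminus\{x\}\notin\Delta$. A simplicial complex $\Gamma$ with vertex set $V$ is centrally symmetric if there is a fixed-point-free involution $\alpha$ of $V$ such that $\alpha(F)$ is a face for every face $F$, and $\{v,\alpha(v)\}$ is not a face for every $v\in V$. *)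

(* Defs.v *)
From mathcomp Require Import all_boot.
Set Implicit Arguments. Unset Strict Implicit. Unset Printing Implicit Defensive.

(* Ground set [1,n] is represented by 'I_n = {0,...,n-1}; B_n = {set 'I_n}. *)

Definition proper_ideal n (D : {set {set 'I_n}}) : Prop :=
  [/\ D != set0,
      (forall A B : {set 'I_n}, A \subset B -> B \in D -> A \in D)
    & [set: 'I_n] \notin D].

Definition bier_face n (D : {set {set 'I_n}}) (B C : {set 'I_n}) : bool :=
  [&& B \proper C, B \in D & C \notin D].

Definition bier_elt n := ({set 'I_n} * {set 'I_n})%type.

Definition bier_le n (u v : bier_elt n) : bool :=
  (u.1 \subset v.1) && (v.2 \subset u.2).

Definition bier_vertices n (D : {set {set 'I_n}}) : {set bier_elt n} :=
  [set v : bier_elt n |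
     [exists x : 'I_n, (v == ([set x], [set: 'I_n])) && ([set x] \in D)]
  || [exists x : 'I_n, (v == (set0, ~: [set x])) && (~: [set x] \notin D)]].

(* The simplicial complex Bier(B_n, D), as a family of vertex sets: the
   face (B,C) corresponds to the set of vertices lying below it. *)
Definition bier_complex n (D : {set {set 'I_n}}) : {set {set bier_elt n}} :=
  [set F : {set bier_elt n} |
     [exists BC : bier_elt n,
        bier_face D BC.1 BC.2 &&
        (F == [set v in bier_vertices D | bier_le v BC])]].

Definition cs_involution (T : finType) (V : {set T}) (Gamma : {set {set T}})
  (alpha : T -> T) : Prop :=
  [/\ (forall v, v \in V -> alpha v \in V),
      (forall v, v \in V -> alpha (alpha v) = v),
      (forall v, v \in V -> alpha v != v),
      (forall F, F \in Gamma -> alpha @: F \in Gamma)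
    & (forall v, v \in V -> [set v; alpha v] \notin Gamma)].

Definition centrally_symmetric (T : finType) (V : {set T})
  (Gamma : {set {set T}}) : Prop :=
  exists alpha : T -> T, cs_involution V Gamma alpha.

Definition bier_alpha n (v : bier_elt n) : bier_elt n :=
  match [pick x : 'I_n | v == ([set x], [set: 'I_n])] with
  | Some x => (set0, ~: [set x])
  | None =>
    match [pick x : 'I_n | v == (set0, ~: [set x])] with
    | Some x => ([set x], [set: 'I_n])
    | None => v
    end
  end.

(* Main.v *)
Require Import Defs.
From mathcomp Require Import all_boot.

Section S.
Variable n : nat.
Implicit Types (x : 'I_n) (B C : {set 'I_n}).

Lemma alpha1 x : bier_alpha ([set x], [set: 'I_n]) = (set0, ~: [set x]).
Proof.
rewrite /bier_alpha; case: pickP => [y /eqP [/set1_inj ->] //|/(_ x)].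
by rewrite eqxx.
Qed.

Lemma alpha2 x : bier_alpha (set0, ~: [set x]) = ([set x], [set: 'I_n]).
Proof.
rewrite /bier_alpha; case: pickP => [y /eqP [H _]|_].
  by have := set11 y; rewrite -H inE.
case: pickP => [y /eqP [H]|/(_ x)]; last by rewrite eqxx.
by rewrite -(setCK [set x]) H setCK.
Qed.

Lemma sub_compl1 B x : (B \subset ~: [set x]) = (x \notin B).
Proof. by rewrite -{1}(setCK B) setCS sub1set in_setC. Qed.

Variable D : {set {set 'I_n}}.
Hypothesis hD : forall A : {set 'I_n}, (A \in D) = (~: A \notin D).

Lemma inV v : v \in bier_vertices D ->
  exists x, [set x] \in D /\ (v = ([set x], [set: 'I_n]) \/ v = (set0, ~: [set x])).
Proof.
rewrite inE => /orP [/existsP [x /andP [/eqP -> H]]|/existsP [x /andP [/eqP -> H]]].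
  by exists x; split; [|left].
by exists x; rewrite hD; split; [|right].
Qed.

Lemma inV1 x : [set x] \in D -> ([set x], [set: 'I_n]) \in bier_vertices D.
Proof. by move=> H; rewrite inE; apply/orP; left; apply/existsP; exists x; rewrite eqxx. Qed.

Lemma inV2 x : [set x] \in D -> (set0, ~: [set x]) \in bier_vertices D.
Proof. by move=> H; rewrite inE; apply/orP; right; apply/existsP; exists x; rewrite eqxx -hD. Qed.

Lemma key u B C : u \in bier_vertices D ->
  bier_le (bier_alpha u) (~: C, ~: B) = bier_le u (B, C).
Proof.
move=> /inV [x [_ [->|->]]]; rewrite ?alpha1 ?alpha2 /bier_le /=.
  by rewrite sub0set setCS !sub1set subsetT andbT.
by rewrite (subsetC C) !sub1set subsetT sub0set andbT.
Qed.

Lemma alphaV v : v \in bier_vertices D -> bier_alpha v \in bier_vertices D.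
Proof. by move=> /inV [x [H [->|->]]]; rewrite ?alpha1 ?alpha2 ?inV1 ?inV2. Qed.

Lemma alphaK v : v \in bier_vertices D -> bier_alpha (bier_alpha v) = v.
Proof. by move=> /inV [x [H [->|->]]]; rewrite ?alpha1 ?alpha2 ?alpha1. Qed.

End S.

Theorem proposition15 (n : nat) (D : {set {set 'I_n}}) :
  2 <= n ->
  proper_ideal D ->
  (forall A : {set 'I_n}, (A \in D) = (~: A \notin D)) ->
  centrally_symmetric (bier_vertices D) (bier_complex D) /\
  cs_involution (bier_vertices D) (bier_complex D) (@bier_alpha n).
Proof.
move=> _ [_ dc _] hD.
suff H : cs_involution (bier_vertices D) (bier_complex D) (@bier_alpha n).
  by split=> //; exists (@bier_alpha n).
split.
- exact: (@alphaV _ _ hD).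
- exact: (@alphaK _ _ hD).
- move=> v /(@inV _ _ hD) [x [_ [->|->]]]; rewrite ?alpha1 ?alpha2.
    apply/eqP => -[H _]; by have := set11 x; rewrite -H inE.
  apply/eqP => -[H _]; by have := set11 x; rewrite H inE.
- move=> F; rewrite inE => /existsP [[B C] /andP [Hf /eqP ->]].
  rewrite inE; apply/existsP; exists (~: C, ~: B); apply/andP; split.
    move: Hf; rewrite /bier_face /= properC (hD (~: C)) setCK -(hD B).
    by case/and3P=> -> -> ->.
  apply/eqP/setP => v; rewrite inE.
  apply/imsetP/idP.
    move=> [w]; rewrite inE => /andP [wV wle] ->.
    by rewrite (@alphaV _ _ hD) // (@key _ _ hD) // wle.
  move=> /andP [vV vle]; exists (bier_alpha v); last by rewrite (@alphaK _ _ hD).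
  rewrite inE (@alphaV _ _ hD) //= -(@key _ _ hD) ?(@alphaV _ _ hD) // (@alphaK _ _ hD) //.
- move=> v vV; rewrite inE; apply/existsP => -[[B C] /andP [Hf /eqP E]].
  have h1 : v \in [set v0 in bier_vertices D | bier_le v0 (B, C)].
    by rewrite -E !inE eqxx.
  have h2 : bier_alpha v \in [set v0 in bier_vertices D | bier_le v0 (B, C)].
    by rewrite -E !inE eqxx orbT.
  rewrite !inE in h1 h2; move/andP: h1 => [_ h1]; move/andP: h2 => [_ h2].
  case/and3P: Hf => /properP [BC _] _ _.
  move: (@inV _ _ hD _ vV) h1 h2 => [x [_ [->|->]]]; rewrite ?alpha1 ?alpha2 /bier_le /=.
    rewrite sub1set => /andP [xB _] /andP [_]; rewrite sub_compl1.
    by rewrite (subsetP BC _ xB).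
  rewrite sub_compl1 => /andP [_ xC] /andP; rewrite sub1set => -[xB _].
  by rewrite (subsetP BC _ xB) in xC.
Qed.
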